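(* Let $X$ be a vector space, $S$ a proper subset of $X$ with $0\in S$, $p:X\to\mathbb{R}$ a sub-linear functional, and $F:S\to\mathbb{R}$ with $F(0)=0$ and $F(s_1)+F(s_2)\le p(s_1+s_2)$ for all $s_1,s_2\in S$. Then $F$ has an extension $\hat F:X\to\mathbb{R}$ with $\hat F(s)=F(s)$ for $s\in S$ and $\hat F(x_1)+\hat F(x_2)\le p(x_1+x_2)$ for all $x_1,x_2\in X$.
   Context: $X$ is a vector space over $K\in\{\mathbb{R},\mathbb{C}\}$. A functional $p$ is sub-linear if $p(x+y)\le p(x)+p(y)$ and $p(tx)=tp(x)$ for all $x,y\in X$ and $t\ge0$. *)

(* Defs.v *)
From HB Require Import structures.
From mathcomp Require Import all_boot all_order all_algebra.
From mathcomp Require Import reals.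
Set Implicit Arguments. Unset Strict Implicit. Unset Printing Implicit Defensive.
Import Order.TTheory GRing.Theory Num.Theory.
Local Open Scope ring_scope.

Definition sublinear (R : realType) (X : lmodType R) (p : X -> R) : Prop :=
  (forall x y : X, p (x + y) <= p x + p y) /\
  (forall (t : R) (x : X), 0 <= t -> p (t *: x) = t * p x).

(* Main.v *)
Require Import Defs.
From HB Require Import structures.
From mathcomp Require Import all_boot all_order all_algebra.
From mathcomp Require Import reals.
From mathcomp Require Import boolp.
Import Order.TTheory GRing.Theory Num.Theory.
Local Open Scope ring_scope.

Theorem corollary2 (R : realType) (X : lmodType R) (S : X -> Prop)
  (p : X -> R) (F : X -> R) :
  ~ (forall x : X, S x) ->
  S 0 ->
  sublinear p ->
  F 0 = 0 ->
  (forall s1 s2 : X, S s1 -> S s2 -> F s1 + F s2 <= p (s1 + s2)) ->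
  exists Fh : X -> R,
    (forall s : X, S s -> Fh s = F s) /\
    (forall x1 x2 : X, Fh x1 + Fh x2 <= p (x1 + x2)).
Proof.
move=> _ S0 [padd phom] F0 HF.
have p0 : p 0 = 0.
  by have := phom 0 0 (lexx 0); rewrite scale0r mul0r.
have pneg : forall y, 0 <= p y + p (- y).
  by move=> y; rewrite -p0 -(subrr y); apply: padd.
have Fle : forall s, S s -> F s <= p s.
  by move=> s Ss; have := HF 0 s S0 Ss; rewrite F0 add0r add0r.
exists (fun x => if pselect (S x) then F x else - p (- x)); split.
  by move=> s Ss; case: pselect.
move=> x1 x2.
case: pselect => H1; case: pselect => H2.
- exact: HF.
- apply: le_trans (_ : p x1 - p (- x2) <= _).
    by rewrite lerD2r; apply: Fle.
  rewrite lerBlDr; apply: le_trans (padd _ _).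
  by rewrite addrK.
- apply: le_trans (_ : p x2 - p (- x1) <= _).
    by rewrite addrC lerD2r; apply: Fle.
  rewrite lerBlDr; apply: le_trans (padd _ _).
  by rewrite addrC addKr.
- have h1 := pneg (x1 + x2).
  have h2 := padd (- x1) (- x2).
  rewrite -opprD in h2.
  rewrite -opprD; rewrite -subr_ge0 opprK.
  apply: le_trans h1 _.
  have := lerD2l (p (x1 + x2)) (p (- (x1 + x2))) (p (- x1) + p (- x2)).
  move=> ->; exact: h2.
Qed.
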